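(* Run the rank-augmenting TTN integrator (described in the context) on the maximal tree $\bar\tau$ with an orthonormal starting TTN $Y_{\bar\tau}^0$ of full tree rank, a function $F$, and times $t_0<t_1$. Let $\tau=(\tau_1,\dots,\tau_m)$ be any non-leaf subtree of $\bar\tau$, and consider the call of the integrator at $\tau$ (the top-level call if $\tau=\bar\tau$, otherwise the recursive call arising in the computation), with starting TTN $Y_\tau^0=C_\tau^0\times_0\mathbf{I}_{r_\tau}\times_{i=1}^m\mathbf{U}_{\tau_i}^0$. Let $\widehat{\mathbf{U}}_{\tau_i}$ ($i=1,\dots,m$) and $\widehat C_\tau^0=C_\tau^0\times_{i=1}^m\widehat{\mathbf{M}}_{\tau_i}$ be the augmented basis matrices and augmented initial connection tensor computed in this call, and set $\widehat Y_\tau^0:=\widehat C_\tau^0\times_0\mathbf{I}_{r_\tau}\times_{i=1}^m\widehat{\mathbf{U}}_{\tau_i}$. Then $\widehat Y_\tau^0 = Y_\tau^0$.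
   Context: Tensor notation: for a tensor with modes indexed $0,1,\dots,m$, $\mathrm{mat}_i$ is the mode-$i$ matricization (rows indexed by the $i$th index) and $\mathrm{ten}_i$ its inverse; $A\times_i\mathbf{B}$ is the mode-$i$ product, $\mathrm{mat}_i(A\times_i\mathbf{B})=\mathbf{B}\,\mathrm{mat}_i(A)$; $\times_{i=1}^m$ denotes successive products in modes $1,\dots,m$; ${}^*$ is conjugate transpose; $\|\cdot\|$ and $\langle X,Y\rangle=\sum \overline{x}\,y$ are the Euclidean norm and inner product of the vectors of entries. Trees: given a finite leaf set $\mathcal{L}=\{1,\dots,d\}$, each leaf $l$ is a tree with leaf set $\{l\}$; if $\tau_1,\dots,\tau_m$ ($m\ge2$) are trees with pairwise disjoint leaf sets, the ordered tuple $\tau=(\tau_1,\dots,\tau_m)$ is a tree whose leaf set is their union; the $\tau_i$ are its direct subtrees, and subtrees are defined recursively ($\sigma\le\tau$, $\sigma<\tau$ if also $\sigma\ne\tau$). Fix a tree $\bar\tau$ with leaf set $\mathcal{L}$. Tree tensor networks (TTN): given dimensions $n_l$ and ranks $r_\sigma$ ($\sigma\le\bar\tau$, $r_{\bar\tau}=1$), basis matrices $\mathbf{U}_l\in\mathbb{C}^{n_l\times r_l}$ at leaves and connection tensors $C_\tau\in\mathbb{C}^{r_\tau\times r_{\tau_1}\times\dots\times r_{\tau_m}}$ of full multilinear rank at non-leaf subtrees $\tau=(\tau_1,\dots,\tau_m)$, set $X_l=\mathbf{U}_l^\top$, $X_\tau=C_\tau\times_0\mathbf{I}_{r_\tau}\times_{i=1}^m\mathbf{U}_{\tau_i}\in\mathcal{V}_\tau:=\mathbb{C}^{r_\tau\times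 n_{\tau_1}\times\dots\times n_{\tau_m}}$ with $n_\tau=\prod_i n_{\tau_i}$, and $\mathbf{U}_\tau=\mathrm{mat}_0(X_\tau)^\top\in\mathbb{C}^{n_\tau\times r_\tau}$; for a leaf, $\mathcal{V}_l:=\mathbb{C}^{r_l\times n_l}$. The TTN is orthonormal if every $\mathbf{U}_\sigma$, $\sigma<\bar\tau$, has orthonormal columns. Full tree rank means all connection tensors have full multilinear rank. $\mathcal{V}_{\bar\tau}$ is identified with $\mathbb{C}^{n_1\times\dots\times n_d}$. Reduced operators and starting values: for a non-leaf $\tau=(\tau_1,\dots,\tau_m)$, a function $F_\tau:[t_0,t_1]\times\mathcal{V}_\tau\to\mathcal{V}_\tau$ and a starting TTN $Y_\tau^0=C_\tau^0\times_0\mathbf{I}_{r_\tau}\times_{i=1}^m\mathbf{U}_{\tau_i}^0$ with $\mathbf{U}_{\tau_i}^0=\mathrm{mat}_0(X_{\tau_i}^0)^\top$, compute QR decompositions $\mathrm{mat}_i(C_\tau^0)^\top=\mathbf{Q}_{\tau_i}^0\mathbf{S}_{\tau_i}^{0,\top}$, let $\mathbf{V}_{\tau_i}^0=\mathrm{mat}_i\big(\mathrm{ten}_i(\mathbf{Q}_{\tau_i}^{0,\top})\times_0\mathbf{I}_{r_\tau}\times_{j\ne i}\mathbf{U}_{\tau_j}^0\big)^\top$, prolongation $\pi_{\tau,i}(Y)=\mathrm{ten}_i\big((\mathbf{V}_{\tau_i}^0\mathrm{mat}_0(Y))^\top\big)$ for $Y\in\mathcal{V}_{\tau_i}$, restriction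 $\pi_{\tau,i}^\dagger(Z)=\mathrm{ten}_0\big((\mathrm{mat}_i(Z)\mathbf{V}_{\tau_i}^0)^\top\big)$ for $Z\in\mathcal{V}_\tau$, and set $F_{\tau_i}(t,Y)=\pi_{\tau,i}^\dagger(F_\tau(t,\pi_{\tau,i}(Y)))$ and $Y_{\tau_i}^0=X_{\tau_i}^0\times_0\mathbf{S}_{\tau_i}^{0,\top}$. Rank-augmenting TTN integrator on $(\tau,Y_\tau^0,F_\tau,t_0,t_1)$, $\tau$ non-leaf: (1) for each $i$: if $\tau_i=l$ is a leaf, solve $\dot Y_l=F_l(t,Y_l)$, $Y_l(t_0)=Y_l^0$, let $\widehat{\mathbf{U}}_l$ have orthonormal columns spanning the range of $(Y_l(t_1)^\top,\mathbf{U}_l^0)$, and $\widehat{\mathbf{M}}_l=\widehat{\mathbf{U}}_l^*\mathbf{U}_l^0$; otherwise call the integrator recursively on $(\tau_i,Y_{\tau_i}^0,F_{\tau_i},t_0,t_1)$, obtaining $\widehat Y_{\tau_i}^1$ (with root connection tensor $\widehat C_{\tau_i}^1$) and $\widehat C_{\tau_i}^0$, let $\widehat{\mathbf{Q}}_{\tau_i}$ have orthonormal columns spanning the range of $(\mathrm{mat}_0(\widehat C_{\tau_i}^1)^\top,\mathrm{mat}_0(\widehat C_{\tau_i}^0)^\top)$, let $\widehat X_{\tau_i}$ be $\widehat Y_{\tau_i}^1$ with root connection tensor replaced by $\mathrm{ten}_0(\widehat{\mathbf{Q}}_{\tau_i}^\top)$, and set $\widehat{\mathbf{U}}_{\tau_i}=\mathrm{mat}_0(\widehat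 X_{\tau_i})^\top$, $\widehat{\mathbf{M}}_{\tau_i}=\widehat{\mathbf{U}}_{\tau_i}^*\mathbf{U}_{\tau_i}^0$. (2) Set $\widehat C_\tau^0=C_\tau^0\times_{i=1}^m\widehat{\mathbf{M}}_{\tau_i}$, solve $\dot{\widehat C}_\tau(t)=F_\tau\big(t,\widehat C_\tau(t)\times_0\mathbf{I}_{r_\tau}\times_{i=1}^m\widehat{\mathbf{U}}_{\tau_i}\big)\times_{i=1}^m\widehat{\mathbf{U}}_{\tau_i}^*$, $\widehat C_\tau(t_0)=\widehat C_\tau^0$, set $\widehat C_\tau^1=\widehat C_\tau(t_1)$, and return $\widehat Y_\tau^1=\widehat C_\tau^1\times_0\mathbf{I}_{r_\tau}\times_{i=1}^m\widehat{\mathbf{U}}_{\tau_i}$ and $\widehat C_\tau^0$. At the top level, $F_{\bar\tau}=F$ and $Y_{\bar\tau}^0$ is the given starting TTN. All differential equations are assumed to be solved exactly. *)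

(* Defs.v *)
From HB Require Import structures.
From mathcomp Require Import all_boot all_order all_algebra.
From mathcomp Require Import all_classical all_reals topology normedtype.
From mathcomp.real_closed Require Import complex.
Set Implicit Arguments. Unset Strict Implicit. Unset Printing Implicit Defensive.
Import Order.TTheory GRing.Theory Num.Theory.
Import numFieldNormedType.Exports.
Local Open Scope ring_scope.
Local Open Scope classical_set_scope.

Inductive tree : Type :=
| Leaf of nat
| Node (m : nat) of ('I_m -> tree).

Fixpoint leaves (s : tree) : seq nat :=
  match s with
  | Leaf l => [:: l]
  | Node m ch => flatten [seq leaves (ch i) | i <- enum 'I_m]
  end.

Fixpoint nodes_ge2 (s : tree) : Prop :=
  match s with
  | Leaf _ => True
  | Node m ch => (2 <= m)%N /\ forall i, nodes_ge2 (ch i)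
  end.

(* a tree with leaf set {1,...,d}: m >= 2 at every node, and the leaf sets of
   the direct subtrees are pairwise disjoint (all leaves distinct), with union
   {1,..,d} *)
Definition tree_on (d : nat) (s : tree) : Prop :=
  nodes_ge2 s /\ perm_eq (leaves s) (iota 1 d).

Inductive subtree (s : tree) : tree -> Prop :=
| subtree_refl : subtree s s
| subtree_child m (ch : 'I_m -> tree) (i : 'I_m) :
    subtree s (ch i) -> subtree s (Node ch).

(* Index sets.  Idx n s is the index set of the "physical" modes of V_s:     *)
(* for a leaf l it is 'I_(n l); for tau = (tau_1..tau_m) it is the product   *)
(* of the index sets of the tau_i.  So V_tau = C^{r_tau x n_tau1 x..x n_taum}*)
(* is the type of functions 'I_(r tau) -> Idx n tau -> C, the mode i index   *)
(* (i >= 1) being the i-th component of the Idx n tau index.                 *)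
Fixpoint Idx (n : nat -> nat) (s : tree) : finType :=
  match s with
  | Leaf l => 'I_(n l)
  | Node m ch => {dffun forall i : 'I_m, Idx n (ch i)}
  end.

Definition idx_at (n : nat -> nat) m (ch : 'I_m -> tree)
  (x : Idx n (Node ch)) (i : 'I_m) : Idx n (ch i) :=
  (x : {dffun forall i : 'I_m, Idx n (ch i)}) i.

Definition dfw m (T : 'I_m -> finType) (b : {dffun forall j : 'I_m, T j})
  (i : 'I_m) (k : T i) : {dffun forall j : 'I_m, T j} :=
  [ffun j => @dfwith _ (fun j => T j) (fun j => b j) i k j].
Arguments dfw {m T} b i k.

Section TTN.
Context {R : realType}.
Local Notation C := (R[i]).

Definition V (n : nat -> nat) (r : tree -> nat) (s : tree) : Type :=
  'I_(r s) -> Idx n s -> C.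

(* connection tensors at tau = Node ch: C in C^{r0 x rc_1 x ... x rc_m},
   written as functions of the mode-0 index and the multi-index of modes 1..m *)
Definition ctens (r0 : nat) m (rc : 'I_m -> nat) : Type :=
  'I_r0 -> {dffun forall i : 'I_m, 'I_(rc i)} -> C.

(* successive mode products:  Cn x_0 I x_{i=1}^m U_i  (U_i of size n_{tau_i} x rc_i),
   written entrywise *)
Definition mode_prods (n : nat -> nat) (r0 : nat) m (ch : 'I_m -> tree)
  (rc : 'I_m -> nat) (Cn : ctens r0 rc)
  (U : forall i : 'I_m, Idx n (ch i) -> 'I_(rc i) -> C) :
  'I_r0 -> Idx n (Node ch) -> C :=
  fun a x => \sum_(b : {dffun forall i : 'I_m, 'I_(rc i)})
               Cn a b * \prod_(i < m) U i (idx_at x i) (b i).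

(* successive mode products with the conjugate transposes:
   Z x_{i=1}^m U_i^*  *)
Definition mode_prods_adj (n : nat -> nat) (r0 : nat) m (ch : 'I_m -> tree)
  (rc : 'I_m -> nat) (Z : 'I_r0 -> Idx n (Node ch) -> C)
  (U : forall i : 'I_m, Idx n (ch i) -> 'I_(rc i) -> C) : ctens r0 rc :=
  fun a bh => \sum_(x : Idx n (Node ch))
               Z a x * \prod_(i < m) (U i (idx_at x i) (bh i))^*.

(* The ttn_basis matrices U_s = mat_0(X_s)^T of a TTN with leaf bases Ul and
   connection tensors Cn (X_l = U_l^T, X_tau = C_tau x_0 I x_i U_{tau_i}). *)
Fixpoint ttn_basis (n : nat -> nat) (r : tree -> nat)
  (Ul : forall l : nat, 'I_(n l) -> 'I_(r (Leaf l)) -> C)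
  (Cn : forall m (ch : 'I_m -> tree), ctens (r (Node ch)) (fun i => r (ch i)))
  (s : tree) : Idx n s -> 'I_(r s) -> C :=
  match s return Idx n s -> 'I_(r s) -> C with
  | Leaf l => Ul l
  | Node m ch => fun x a =>
      mode_prods (Cn m ch) (fun i => @ttn_basis n r Ul Cn (ch i)) a x
  end.
Arguments ttn_basis {n r} Ul Cn s _ _.
Arguments mode_prods {n r0 m ch rc} Cn U _ _.
Arguments mode_prods_adj {n r0 m ch rc} Z U _ _.

Definition orthonormal_cols (I : finType) k (A : I -> 'I_k -> C) : Prop :=
  forall j j' : 'I_k, \sum_(x : I) (A x j)^* * A x j' = (j == j')%:R.

Definition range_sub (I J K : finType) (A : I -> J -> C) (B : I -> K -> C) : Prop :=
  forall j : J, exists c : K -> C, forall x, A x j = \sum_(k : K) B x k * c k.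

Definition same_range (I J K : finType) (A : I -> J -> C) (B : I -> K -> C) : Prop :=
  range_sub A B /\ range_sub B A.

Definition cat_cols (I J K : finType) (A : I -> J -> C) (B : I -> K -> C) :
  I -> (J + K)%type -> C :=
  fun x jk => match jk with inl j => A x j | inr k => B x k end.

(* full multilinear rank: every matricization mat_k(Cn), k = 0..m, has
   linearly independent rows (rank = dimension of mode k) *)
Definition full_mlrank (r0 : nat) m (rc : 'I_m -> nat) (Cn : ctens r0 rc) : Prop :=
  (forall c : 'I_r0 -> C,
     (forall b, \sum_(a < r0) c a * Cn a b = 0) -> forall a, c a = 0) /\
  (forall (i : 'I_m) (c : 'I_(rc i) -> C),
     (forall a b, \sum_(k < rc i) c k * Cn a (dfw b i k) = 0) -> forall k, c k = 0).

(* derivative of a real function at t in [t0,t1], relative to [t0,t1]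
   (one-sided at the end points) *)
Definition has_rderiv_on (t0 t1 : R) (g : R -> R) (t v : R) : Prop :=
  h^-1 * (g (t + h) - g t)
    @[h --> within [set h | h != 0 /\ t0 <= t + h <= t1] (nbhs (0 : R))] --> v.

Definition has_cderiv_on (t0 t1 : R) (y : R -> C) (t : R) (v : C) : Prop :=
  has_rderiv_on t0 t1 (fun s => complex.Re (y s)) t (complex.Re v) /\
  has_rderiv_on t0 t1 (fun s => complex.Im (y s)) t (complex.Im v).

Definition ode_sol (A B : Type) (t0 t1 : R)
  (f : R -> (A -> B -> C) -> A -> B -> C)
  (y : R -> A -> B -> C) (y0 : A -> B -> C) : Prop :=
  (forall a b, y t0 a b = y0 a b) /\
  (forall t, t0 <= t <= t1 ->
     forall a b, has_cderiv_on t0 t1 (fun s => y s a b) t (f t (y t) a b)).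

(* Given tau = Node ch, the tensor Qt = ten_i(Q_{tau_i}^{0,T}) (of the shape of
   C_tau) and the bases U_{tau_j}: the matrix
   V_{tau_i}^0 = mat_i(ten_i(Q^T) x_0 I x_{j<>i} U_{tau_j})^T,
   with rows (a, x_{-i}) (x_{-i} = all components of x but the i-th, which is
   ignored) and columns k. *)
Definition Vmat (n : nat -> nat) (r : tree -> nat) m (ch : 'I_m -> tree)
  (i : 'I_m) (Qt : ctens (r (Node ch)) (fun j => r (ch j)))
  (U : forall j : 'I_m, Idx n (ch j) -> 'I_(r (ch j)) -> C)
  (a : 'I_(r (Node ch))) (x : Idx n (Node ch)) (k : 'I_(r (ch i))) : C :=
  \sum_(b : {dffun forall j : 'I_m, 'I_(r (ch j))} | b i == k)
     Qt a b * \prod_(j < m | j != i) U j (idx_at x j) (b j).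


Arguments Vmat {n r m ch} i Qt U a x k.

(* prolongation  pi_{tau,i}(Y) = ten_i((V^0 mat_0(Y))^T) *)
Definition prolong (n : nat -> nat) (r : tree -> nat) m (ch : 'I_m -> tree)
  (i : 'I_m) (Vm : 'I_(r (Node ch)) -> Idx n (Node ch) -> 'I_(r (ch i)) -> C)
  (Y : V n r (ch i)) : V n r (Node ch) :=
  fun a x => \sum_(k < r (ch i)) Vm a x k * Y k (idx_at x i).


Arguments prolong {n r m ch i} Vm Y _ _.

(* restriction  pi^dagger_{tau,i}(Z) = ten_0((mat_i(Z) V^0)^T) *)
Definition restrict (n : nat -> nat) (r : tree -> nat) m (ch : 'I_m -> tree)
  (i : 'I_m) (Vm : 'I_(r (Node ch)) -> Idx n (Node ch) -> 'I_(r (ch i)) -> C)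
  (Z : V n r (Node ch)) : V n r (ch i) :=
  fun k y => \sum_(a < r (Node ch)) \sum_(x : Idx n (Node ch) | idx_at x i == y)
               Z a x * Vm a x k.


Arguments restrict {n r m ch i} Vm Z _ _.

(* A complete (exact) run of the rank-augmenting TTN integrator on           *)
(* (tbar, Y^0, F, t0, t1), where Y^0 has leaf bases Ul0 and connection       *)
(* tensors C0 (ranks r).  Every subtree sigma <= tbar is treated by exactly  *)
(* one (recursive) call, so all quantities computed during the run are       *)
(* the properties are the defining steps of the algorithm (all the choices   *)
(* -- QR factors, orthonormal bases, ODE solutions -- are arbitrary valid    *)
(* ones).                                                                    *)
Record integrator_run (n : nat -> nat) (r : tree -> nat) (tbar : tree)
  (Ul0 : forall l : nat, 'I_(n l) -> 'I_(r (Leaf l)) -> C)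
  (C0 : forall m (ch : 'I_m -> tree), ctens (r (Node ch)) (fun i => r (ch i)))
  (F : R -> V n r tbar -> V n r tbar) (t0 t1 : R) := {
  rh : tree -> nat;
  (* S^0_sigma from the QR decomposition in the parent's call *)
  Sf : forall s : tree, 'I_(r s) -> 'I_(r s) -> C;
  (* Q^0_{tau_i}, stored as the tensor ten_i(Q^{0,T}_{tau_i}) of C_tau's shape *)
  Qf : forall m (ch : 'I_m -> tree) (i : 'I_m),
         ctens (r (Node ch)) (fun j => r (ch j));
  (* root connection tensor C^0_tau of the starting TTN Y^0_tau of the call at tau *)
  Cs : forall m (ch : 'I_m -> tree), ctens (r (Node ch)) (fun i => r (ch i));
  Fs : forall s : tree, R -> V n r s -> V n r s;
  (* exact solution Y_l(t) of the leaf ODE *)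
  Yl : forall s : tree, R -> V n r s;
  Uh : forall s : tree, Idx n s -> 'I_(rh s) -> C;
  Qh : forall m (ch : 'I_m -> tree),
         {dffun forall j : 'I_m, 'I_(rh (ch j))} -> 'I_(rh (Node ch)) -> C;
  (* Chat^0_tau, Chat^1_tau and the exact solution Chat_tau(t) *)
  Ch0 : forall m (ch : 'I_m -> tree), ctens (r (Node ch)) (fun i => rh (ch i));
  Ch1 : forall m (ch : 'I_m -> tree), ctens (r (Node ch)) (fun i => rh (ch i));
  Cp  : forall m (ch : 'I_m -> tree), R -> ctens (r (Node ch)) (fun i => rh (ch i));

  run_root_C : forall m (ch : 'I_m -> tree), Node ch = tbar ->
    forall a b, @Cs m ch a b = @C0 m ch a b;
  run_root_F : forall t Y a x, @Fs tbar t Y a x = F t Y a x;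
  (* QR decompositions  mat_i(C^0_tau)^T = Q^0_{tau_i} S^{0,T}_{tau_i}
     (Q orthonormal columns, S^{0,T} upper triangular) *)
  run_QR : forall m (ch : 'I_m -> tree) (i : 'I_m), subtree (Node ch) tbar ->
    [/\ forall a b, @Cs m ch a b =
           \sum_(k < r (ch i)) @Qf m ch i a (dfw b i k) * @Sf (ch i) (b i) k,
        forall k k' : 'I_(r (ch i)),
          \sum_(a < r (Node ch))
            \sum_(b : {dffun forall j : 'I_m, 'I_(r (ch j))} | b i == k)
              (@Qf m ch i a b)^* * @Qf m ch i a (dfw b i k') = (k == k')%:R
      & forall j k : 'I_(r (ch i)), (j < k)%N -> @Sf (ch i) j k = 0];
  (* reduced operators  F_{tau_i}(t,Y) = pi^dagger(F_tau(t, pi(Y))) *)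
  run_F_child : forall m (ch : 'I_m -> tree) (i : 'I_m), subtree (Node ch) tbar ->
    forall t (Y : V n r (ch i)) k y,
      @Fs (ch i) t Y k y =
      restrict (Vmat i (@Qf m ch i) (fun j => ttn_basis Ul0 C0 (ch j)))
               (@Fs (Node ch) t (prolong (Vmat i (@Qf m ch i)
                                 (fun j => ttn_basis Ul0 C0 (ch j))) Y)) k y;
  (* starting values of the recursive calls: Y^0_{tau_i} = X^0_{tau_i} x_0 S^{0,T},
     i.e. the root connection tensor is C^0_{tau_i} x_0 S^{0,T} *)
  run_C_child : forall m (ch : 'I_m -> tree),
    subtree (Node ch) tbar -> Node ch <> tbar ->
    forall a b, @Cs m ch a b = \sum_(k < r (Node ch)) @Sf (Node ch) k a * @C0 m ch k b;
  run_leaf : forall l : nat, subtree (Leaf l) tbar -> Leaf l <> tbar ->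
    [/\ ode_sol t0 t1 (@Fs (Leaf l)) (@Yl (Leaf l))
          (fun a x => \sum_(k < r (Leaf l))
                        @Sf (Leaf l) k a * ttn_basis Ul0 C0 (Leaf l) x k),
        orthonormal_cols (@Uh (Leaf l))
      & same_range (@Uh (Leaf l))
          (cat_cols (fun x a => @Yl (Leaf l) t1 a x) (ttn_basis Ul0 C0 (Leaf l)))];
  run_inner : forall m (ch : 'I_m -> tree),
    subtree (Node ch) tbar -> Node ch <> tbar ->
    [/\ orthonormal_cols (@Qh m ch),
        same_range (@Qh m ch)
          (cat_cols (fun b a => @Ch1 m ch a b) (fun b a => @Ch0 m ch a b))
      & forall x k, @Uh (Node ch) x k =
          mode_prods (fun k b => @Qh m ch b k) (fun j => @Uh (ch j)) k x];
  run_node : forall m (ch : 'I_m -> tree), subtree (Node ch) tbar ->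
    [/\ forall a bh, @Ch0 m ch a bh =
          \sum_(b : {dffun forall j : 'I_m, 'I_(r (ch j))})
             @Cs m ch a b * \prod_(i < m)
               (* Mhat_{tau_i} = Uhat_{tau_i}^* U^0_{tau_i} *)
               (\sum_(x : Idx n (ch i))
                  (@Uh (ch i) x (bh i))^* * ttn_basis Ul0 C0 (ch i) x (b i)),
        ode_sol t0 t1
          (fun t Cc => mode_prods_adj
                         (@Fs (Node ch) t (mode_prods Cc (fun i => @Uh (ch i))))
                         (fun i => @Uh (ch i)))
          (@Cp m ch) (@Ch0 m ch)
      & forall a b, @Ch1 m ch a b = @Cp m ch t1 a b]
}.

End TTN.

Arguments ttn_basis {R n r} Ul Cn s _ _.
Arguments mode_prods {R n r0 m ch rc} Cn U _ _.
Arguments mode_prods_adj {R n r0 m ch rc} Z U _ _.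
Arguments Vmat {R n r m ch} i Qt U a x k.
Arguments prolong {R n r m ch i} Vm Y _ _.
Arguments restrict {R n r m ch i} Vm Z _ _.

(* Main.v *)
Require Import Defs.
From HB Require Import structures.
From mathcomp Require Import all_boot all_order all_algebra.
From mathcomp Require Import all_classical all_reals topology normedtype.
From mathcomp.real_closed Require Import complex.
From mathcomp Require Import boolp ring.
Import Order.TTheory GRing.Theory Num.Theory.
Import numFieldNormedType.Exports.
Local Open Scope ring_scope.

Lemma prod_sum_dffun (K : comNzRingType) (I : finType) (T : I -> finType)
  (f : forall i, T i -> K) :
  \prod_(i : I) \sum_(k : T i) f i k =
  \sum_(g : {dffun forall i : I, T i}) \prod_(i : I) f i (g i).
Proof.
transitivity (\prod_(i : I) \sum_(j in tagged_with T i) untag 0 (f i) j).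
  by apply: eq_bigr => i _; rewrite (big_tag (fun i => f i)).
rewrite bigA_distr_big_dep.
pose P_ := fun i => [ffun k : T i => f i k].
transitivity (\sum_(g in family (tagged_with T)) \prod_(i : I) untag 0 (P_ i) (g i)).
  apply: eq_bigr => g _; apply: eq_bigr => i _.
  rewrite /untag; case: eqP => // e; by rewrite ffunE.
rewrite -(big_fprod _ _ P_).
rewrite (reindex (@fprod_of_dffun _ T)); last first.
  by apply/onW_bij/fprod_of_dffun_bij.
apply: eq_bigr => g _; apply: eq_bigr => i _.
by rewrite ffunE fprodE.
Qed.

Section Alg.
Variable R : realType.
Local Notation C := (R[i]).

Lemma proj_id (I J : finType) k (Uh : I -> 'I_k -> C) (U0 : I -> J -> C) :
  orthonormal_cols Uh -> range_sub U0 Uh ->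
  forall x b, \sum_(j < k) Uh x j * (\sum_y (Uh y j)^* * U0 y b) = U0 x b.
Proof.
move=> on rs x b; have [c hc] := rs b.
rewrite hc; apply: eq_bigr => j _; congr (_ * _).
under eq_bigr => y _ do rewrite hc mulr_sumr.
rewrite exchange_big /=.
rewrite (bigD1 j) //= [X in _ + X]big1 ?addr0.
  under eq_bigr => y _ do rewrite mulrA.
  by rewrite -big_distrl /= on eqxx mul1r.
move=> j' /negPf nj.
under eq_bigr => y _ do rewrite mulrA.
by rewrite -big_distrl /= on eq_sym nj mul0r.
Qed.

Lemma prod_eq_ind m (T : 'I_m -> finType) (b b' : {dffun forall i : 'I_m, T i}) :
  \prod_(i < m) ((b i == b' i)%:R : C) = (b == b')%:R.
Proof.
case: eqP => [->|ne].
  by rewrite big1 // => i _; rewrite eqxx.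
have [i hi] : exists i, b i != b' i.
  apply/existsP; apply: contraT; rewrite negb_exists => /forallP h.
  by case: ne; apply/ffunP => i; move: (h i); rewrite negbK => /eqP.
by rewrite (bigD1 i) //= (negPf hi) mul0r.
Qed.

Lemma leftinj_rinv k (S : 'I_k -> 'I_k -> C) :
  (forall c : 'I_k -> C, (forall a, \sum_(j < k) c j * S j a = 0) -> forall j, c j = 0) ->
  exists T : 'I_k -> 'I_k -> C, forall j j', \sum_(a < k) S j a * T a j' = (j == j')%:R.
Proof.
move=> li.
pose Sm := \matrix_(j < k, a < k) S j a.
have rf : row_free Sm.
  rewrite -kermx_eq0; apply/eqP/row_matrixP => i; rewrite row0.
  apply/rowP => j; rewrite mxE.
  have h := mulmx_ker Sm.
  have H : forall a, \sum_(l < k) kermx Sm i l * S l a = 0.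
    move=> a; transitivity ((kermx Sm *m Sm) i a); last by rewrite h mxE.
    rewrite [RHS]mxE; apply: eq_bigr => l _; congr (_ * _); by rewrite /Sm mxE.
  by rewrite [RHS]mxE (li _ H j).
have [B hB] := row_freeP rf.
exists (fun a j' => B a j') => j j'.
have := congr1 (fun M : 'M[C]_k => M j j') hB; rewrite !mxE => <-.
by apply: eq_bigr => a _; rewrite mxE.
Qed.
End Alg.
Fixpoint tsize (s : tree) : nat :=
  match s with
  | Leaf _ => 1
  | Node m ch => (sumn [seq tsize (ch i) | i <- enum 'I_m]).+1
  end.

Lemma in_sumn (s : seq nat) x : x \in s -> (x <= sumn s)%N.
Proof.
elim: s => //= y s IH; rewrite in_cons => /orP [/eqP ->|/IH h]; first exact: leq_addr.
exact: (leq_trans h (leq_addl _ _)).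
Qed.

Lemma tsize_child m (ch : 'I_m -> tree) i : (tsize (ch i) < tsize (Node ch))%N.
Proof.
rewrite /= ltnS; apply: in_sumn; apply/mapP; exists i => //; by rewrite mem_enum.
Qed.

Lemma subtree_size s t : subtree s t -> (tsize s <= tsize t)%N.
Proof.
elim => // m ch i _ h; apply: (leq_trans h); apply: ltnW; exact: tsize_child.
Qed.

Lemma subtree_trans a b c : subtree a b -> subtree b c -> subtree a c.
Proof. move=> hab; elim => // m ch i _ h; exact: subtree_child h. Qed.

Lemma child_sub m (ch : 'I_m -> tree) i t : subtree (Node ch) t -> subtree (ch i) t.
Proof. move=> h; apply: subtree_trans h; apply: (@subtree_child _ _ _ i); exact: subtree_refl. Qed.

Lemma child_neq m (ch : 'I_m -> tree) i t : subtree (Node ch) t -> ch i <> t.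
Proof.
move=> h e; have := subtree_size _ _ h; rewrite -e.
by rewrite leqNgt tsize_child.
Qed.

Lemma parent_ex s t : subtree s t -> s <> t ->
  exists m (ch : 'I_m -> tree) i, ch i = s /\ subtree (Node ch) t.
Proof.
elim => [//|m ch i hs IH ne].
have [e|ne'] := pselect (s = ch i).
  exists m, ch, i; split => //; exact: subtree_refl.
have [m' [ch' [i' [e h]]]] := IH (fun x => ne' x).
by exists m', ch', i'; split => //; exact: subtree_child h.
Qed.

Arguments child_sub {m ch} i {t}.
Arguments child_neq {m ch} i {t}.
Arguments parent_ex {s t}.

Section Run.
Variables (R : realType) (n : nat -> nat) (r : tree -> nat) (tbar : tree)
 (Ul0 : forall l, 'I_(n l) -> 'I_(r (Leaf l)) -> R[i])
 (C0 : forall m (ch : 'I_m -> tree), ctens (r (Node ch)) (fun i => r (ch i)))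
 (F : R -> V n r tbar -> V n r tbar) (t0 t1 : R)
 (run : integrator_run Ul0 C0 F t0 t1).
Local Notation C := (R[i]).
Local Notation U0 := (ttn_basis Ul0 C0).
Local Notation uh s := (@Uh _ _ _ _ _ _ _ _ _ run s).

Lemma node_id m (ch : 'I_m -> tree) : subtree (Node ch) tbar ->
  (forall i x b, \sum_k uh (ch i) x k * (\sum_y (uh (ch i) y k)^* * U0 (ch i) y b)
                 = U0 (ch i) x b) ->
  forall a x,
  mode_prods (@Ch0 _ _ _ _ _ _ _ _ _ run m ch) (fun i => uh (ch i)) a x
  = mode_prods (@Cs _ _ _ _ _ _ _ _ _ run m ch) (fun i => U0 (ch i)) a x.
Proof.
move=> hs hp a x.
have [e0 _ _] := run_node run hs.
rewrite /mode_prods.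
under eq_bigr => bh _ do rewrite e0 mulr_suml.
rewrite exchange_big /=.
apply: eq_bigr => b _.
rewrite [in RHS](eq_bigr _ (fun i _ => esym (hp i (idx_at x i) (b i)))).
rewrite prod_sum_dffun mulr_sumr; apply: eq_bigr => bh _.
rewrite big_split /=; ring.
Qed.

Lemma ortho_node m (ch : 'I_m -> tree) :
  orthonormal_cols (@Qh _ _ _ _ _ _ _ _ _ run m ch) ->
  (forall i, orthonormal_cols (uh (ch i))) ->
  (forall x k, uh (Node ch) x k =
     mode_prods (fun k b => @Qh _ _ _ _ _ _ _ _ _ run m ch b k) (fun j => uh (ch j)) k x) ->
  orthonormal_cols (uh (Node ch)).
Proof.
move=> oq oc e j j'.
pose Q := @Qh _ _ _ _ _ _ _ _ _ run m ch.
have hs : forall b b' : {dffun forall i : 'I_m, 'I_(rh run (ch i))},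
  \sum_(x : Idx n (Node ch)) \prod_(i < m)
     ((uh (ch i) (idx_at x i) (b i))^* * uh (ch i) (idx_at x i) (b' i)) = (b == b')%:R.
  move=> b b'; rewrite -prod_eq_ind.
  transitivity (\prod_(i < m) \sum_(y : Idx n (ch i))
                   ((uh (ch i) y (b i))^* * uh (ch i) y (b' i))).
    by rewrite prod_sum_dffun.
  by apply: eq_bigr => i _; rewrite oc.
transitivity (\sum_b \sum_b' (Q b j)^* * Q b' j' *
   \sum_(x : Idx n (Node ch)) \prod_(i < m)
     ((uh (ch i) (idx_at x i) (b i))^* * uh (ch i) (idx_at x i) (b' i))).
  under eq_bigr => x _ do rewrite !e /mode_prods rmorph_sum /= big_distrlr /=.
  rewrite exchange_big /=; apply: eq_bigr => b _.
  rewrite exchange_big /=; apply: eq_bigr => b' _.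
  rewrite mulr_sumr; apply: eq_bigr => x _.
  rewrite rmorphM rmorph_prod /= big_split /=; rewrite /Q; ring.
under eq_bigr => b _ do under eq_bigr => b' _ do rewrite hs.
rewrite -oq; apply: eq_bigr => b _.
rewrite (bigD1 b) //= eqxx mulr1 big1 ?addr0 // => b' /negPf nb.
by rewrite eq_sym nb mulr0.
Qed.

Lemma range_node m (ch : 'I_m -> tree) :
  subtree (Node ch) tbar -> Node ch <> tbar ->
  (forall i x b, \sum_k uh (ch i) x k * (\sum_y (uh (ch i) y k)^* * U0 (ch i) y b)
                 = U0 (ch i) x b) ->
  (forall c : 'I_(r (Node ch)) -> C,
     (forall a, \sum_(j < r (Node ch)) c j * @Sf _ _ _ _ _ _ _ _ _ run (Node ch) j a = 0) ->
     forall j, c j = 0) ->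
  range_sub (U0 (Node ch)) (uh (Node ch)).
Proof.
move=> hs hn hp li.
have [oq [_ rq] eU] := run_inner run hs hn.
have [T hT] := @leftinj_rinv R _ _ li.
have [c hc] := choice (fun a : 'I_(r (Node ch)) => rq (inr a)).
have ec := run_C_child run hs hn.
have hc' : forall a bh, @Ch0 _ _ _ _ _ _ _ _ _ run m ch a bh
                        = \sum_k @Qh _ _ _ _ _ _ _ _ _ run m ch bh k * c a k.
  by move=> a bh; exact: (hc a bh).
pose S := @Sf _ _ _ _ _ _ _ _ _ run (Node ch).
have hW : forall a x, \sum_k S k a * U0 (Node ch) x k
                      = \sum_j uh (Node ch) x j * c a j.
  move=> a x.
  transitivity (mode_prods (@Ch0 _ _ _ _ _ _ _ _ _ run m ch) (fun i => uh (ch i)) a x).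
    rewrite node_id // /mode_prods.
    under [RHS]eq_bigr => b _ do rewrite ec mulr_suml.
    rewrite exchange_big /=; apply: eq_bigr => k _.
    rewrite /= /mode_prods mulr_sumr; apply: eq_bigr => b _; rewrite /S; ring.
  rewrite /mode_prods.
  under eq_bigr => bh _ do rewrite hc' mulr_suml.
  rewrite exchange_big /=; apply: eq_bigr => j _.
  rewrite eU /mode_prods mulr_suml; apply: eq_bigr => bh _; ring.
move=> k'; exists (fun j => \sum_a c a j * T a k') => x.
under eq_bigr => j _ do rewrite mulr_sumr.
rewrite exchange_big /=.
under eq_bigr => a _ do (under eq_bigr => j _ do rewrite mulrA; rewrite -big_distrl /= -hW).
under eq_bigr => a _ do rewrite big_distrl /=.
rewrite exchange_big /=.
rewrite (bigD1 k') //= [X in _ + X]big1 ?addr0.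
  have h1 : \sum_a S k' a * T a k' = 1 by rewrite hT eqxx.
  rewrite -[LHS]mulr1 -h1 mulr_sumr; apply: eq_bigr => a _; ring.
move=> k /negPf nk.
have -> : \sum_a S k a * U0 (Node ch) x k * T a k' = U0 (Node ch) x k * \sum_a S k a * T a k'.
  by rewrite mulr_sumr; apply: eq_bigr => a _; ring.
by rewrite hT nk mulr0.
Qed.

Definition leftinj k (S : 'I_k -> 'I_k -> C) :=
  forall c : 'I_k -> C, (forall a, \sum_(j < k) c j * S j a = 0) -> forall j, c j = 0.

Definition fullI r0 m (rc : 'I_m -> nat) (Cn : ctens r0 rc) (i : 'I_m) :=
  forall c : 'I_(rc i) -> C,
     (forall a b, \sum_(k < rc i) c k * Cn a (dfw b i k) = 0) -> forall k, c k = 0.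

Arguments leftinj {k} S.
Arguments fullI {r0 m rc} Cn i.

Lemma dfw_at m (T : 'I_m -> finType) (b : {dffun forall j : 'I_m, T j}) i k :
  (dfw b i k) i = k.
Proof. rewrite /dfw ffunE; exact: dfwith_in. Qed.

Lemma dfw_dfw m (T : 'I_m -> finType) (b : {dffun forall j : 'I_m, T j}) i k k' :
  dfw (dfw b i k) i k' = dfw b i k'.
Proof.
apply/ffunP => l; rewrite /dfw !ffunE.
case: (eqVneq i l) => [e|nl].
  subst l; transitivity k'; first exact: dfwith_in.
  symmetry; exact: dfwith_in.
transitivity ([ffun j => @dfwith _ (fun j => T j) (fun j => b j) i k j] l).
  exact: dfwith_out.
rewrite ffunE; transitivity (b l); first exact: dfwith_out.
symmetry; exact: dfwith_out.
Qed.

Lemma li_of_full m (ch : 'I_m -> tree) i : subtree (Node ch) tbar ->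
  fullI (@Cs _ _ _ _ _ _ _ _ _ run m ch) i ->
  leftinj (@Sf _ _ _ _ _ _ _ _ _ run (ch i)).
Proof.
move=> hs fu c hc; apply: fu => a b.
have [eq _ _] := run_QR run i hs.
under eq_bigr => j _ do rewrite eq dfw_at mulr_sumr.
rewrite exchange_big /=.
rewrite big1 // => k _.
under eq_bigr => j _ do rewrite dfw_dfw mulrCA.
by rewrite -mulr_sumr hc mulr0.
Qed.

Hypothesis fullC0 : forall m (ch : 'I_m -> tree), subtree (Node ch) tbar ->
  full_mlrank (C0 m ch).

Lemma full_of_li m (ch : 'I_m -> tree) : subtree (Node ch) tbar -> Node ch <> tbar ->
  leftinj (@Sf _ _ _ _ _ _ _ _ _ run (Node ch)) ->
  forall i, fullI (@Cs _ _ _ _ _ _ _ _ _ run m ch) i.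
Proof.
move=> hs hn li i c hc.
have [_ fc] := @fullC0 _ ch hs.
apply: (fc i c) => a0 b.
pose v := fun a0 => \sum_k c k * C0 m ch a0 (dfw b i k).
apply: (li v) => a.
rewrite -[RHS](hc a b) /v.
under [RHS]eq_bigr => k _ do rewrite (run_C_child run hs hn) mulr_sumr.
rewrite [RHS]exchange_big /=.
apply: eq_bigr => j _; rewrite mulr_suml; apply: eq_bigr => k _; ring.
Qed.

Definition Qt (s : tree) : Prop :=
  match s with
  | Leaf _ => True
  | Node m ch => forall i, fullI (@Cs _ _ _ _ _ _ _ _ _ run m ch) i
  end.

Lemma Qt_root : Qt tbar.
Proof.
suff H : forall s, subtree s tbar -> s = tbar -> Qt s by exact: H _ (subtree_refl _) erefl.
move=> [l|m ch] //= hs e i c hc.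
have [_ fc] := @fullC0 _ ch hs.
apply: (fc i c) => a b.
rewrite -[RHS](hc a b); apply: eq_bigr => k _.
by rewrite (run_root_C run e).
Qed.

Lemma Qt_down t s : subtree s t -> subtree t tbar -> Qt t -> Qt s.
Proof.
elim => // m ch i hs' IH hs Q.
apply: IH; first exact: child_sub hs.
have li := @li_of_full _ _ i hs (Q i).
have hs2 := child_sub i hs; have hn := child_neq i hs.
move: li hs2 hn; case: (ch i) => [l|m' ch'] //= li hs2 hn.
exact: (@full_of_li _ ch').
Qed.

Lemma Qt_all s : subtree s tbar -> Qt s.
Proof. move=> hs; exact: Qt_down _ _ hs (subtree_refl _) Qt_root. Qed.

Lemma li_all s : subtree s tbar -> s <> tbar -> leftinj (@Sf _ _ _ _ _ _ _ _ _ run s).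
Proof.
move=> hs hn; have [m [ch [i [e hp]]]] := parent_ex hs hn.
have := @li_of_full _ _ i hp (Qt_all _ hp i).
by rewrite e.
Qed.

Definition Good (s : tree) : Prop :=
  orthonormal_cols (uh s) /\ range_sub (U0 s) (uh s).

Lemma good_all s : subtree s tbar -> s <> tbar -> Good s.
Proof.
elim: s => [l|m ch IH] hs hn.
  have [_ o [_ rg]] := run_leaf run hs hn.
  split => // j; have [c hc] := rg (inr j); exists c => x; exact: hc x.
have gc : forall i, Good (ch i).
  move=> i; apply: IH; [exact: child_sub hs | exact: child_neq hs].
have hp : forall i x b, \sum_k uh (ch i) x k * (\sum_y (uh (ch i) y k)^* * U0 (ch i) y b)
                 = U0 (ch i) x b.
  by move=> i; apply: proj_id; case: (gc i).
have [oq _ eU] := run_inner run hs hn.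
split.
  by apply: ortho_node => // i; case: (gc i).
by apply: range_node => //; exact: li_all.
Qed.

Lemma main m (ch : 'I_m -> tree) : subtree (Node ch) tbar ->
  forall a x,
  mode_prods (@Ch0 _ _ _ _ _ _ _ _ _ run m ch) (fun i => uh (ch i)) a x
  = mode_prods (@Cs _ _ _ _ _ _ _ _ _ run m ch) (fun i => U0 (ch i)) a x.
Proof.
move=> hs; apply: node_id => // i.
have [o rg] := good_all _ (child_sub i hs) (child_neq i hs).
exact: proj_id.
Qed.

End Run.
Theorem lemma6p1 (R : realType) (d : nat) (n : nat -> nat) (r : tree -> nat)
  (tbar : tree)
  (Ul0 : forall l : nat, 'I_(n l) -> 'I_(r (Leaf l)) -> R[i])
  (C0 : forall m (ch : 'I_m -> tree), ctens (r (Node ch)) (fun i => r (ch i)))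
  (F : R -> V n r tbar -> V n r tbar) (t0 t1 : R) :
  tree_on d tbar ->
  r tbar = 1%N ->
  (* the starting TTN is orthonormal ... *)
  (forall s : tree, subtree s tbar -> s <> tbar ->
     orthonormal_cols (ttn_basis Ul0 C0 s)) ->
  (* ... and of full tree rank *)
  (forall m (ch : 'I_m -> tree), subtree (Node ch) tbar ->
     full_mlrank (C0 m ch)) ->
  t0 < t1 ->
  forall run : integrator_run Ul0 C0 F t0 t1,
  forall m (ch : 'I_m -> tree), subtree (Node ch) tbar ->
  forall (a : 'I_(r (Node ch))) (x : Idx n (Node ch)),
    mode_prods (@Ch0 _ _ _ _ _ _ _ _ _ run m ch) (fun i => @Uh _ _ _ _ _ _ _ _ _ run (ch i)) a x
    = mode_prods (@Cs _ _ _ _ _ _ _ _ _ run m ch) (fun i => ttn_basis Ul0 C0 (ch i)) a x.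
Proof.
move=> _ _ _ hfull _ run m ch hs a x.
exact: (@main R n r tbar Ul0 C0 F t0 t1 run hfull m ch hs a x).
Qed.
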